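(* Let $\Lambda>1$. Then there exists at most one solution, modulo translations in $z$, of \[ -v_1''+v_1^3-v_1+\Lambda v_2^2v_1=0,\qquad -v_2''+v_2^3-v_2+\Lambda v_1^2v_2=0,\qquad z\in\mathbb{R}, \] \[ (v_1,v_2)\to(0,1)\ \text{as } z\to-\infty,\qquad (v_1,v_2)\to(1,0)\ \text{as } z\to+\infty, \] such that both $v_1$ and $v_2$ are positive and at least one of $v_1,v_2$ is strictly monotone on $\mathbb{R}$. *)

(* Defs.v *)
From Stdlib Require Import Reals.
From Coquelicot Require Import Coquelicot.
Open Scope R_scope.

Definition twice_derivable (f : R -> R) : Prop :=
  forall z, ex_derive f z /\ ex_derive (Derive f) z.

Definition is_system_solution (L : R) (v1 v2 : R -> R) : Prop :=
  twice_derivable v1 /\ twice_derivable v2 /\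
  (forall z, - Derive_n v1 2 z + v1 z ^ 3 - v1 z + L * v2 z ^ 2 * v1 z = 0) /\
  (forall z, - Derive_n v2 2 z + v2 z ^ 3 - v2 z + L * v1 z ^ 2 * v2 z = 0).

Definition has_boundary_conditions (v1 v2 : R -> R) : Prop :=
  is_lim v1 m_infty 0 /\ is_lim v2 m_infty 1 /\
  is_lim v1 p_infty 1 /\ is_lim v2 p_infty 0.

Definition strictly_monotone (f : R -> R) : Prop :=
  (forall x y, x < y -> f x < f y) \/ (forall x y, x < y -> f y < f x).

Definition admissible (L : R) (v1 v2 : R -> R) : Prop :=
  is_system_solution L v1 v2 /\ has_boundary_conditions v1 v2 /\
  (forall z, 0 < v1 z) /\ (forall z, 0 < v2 z) /\
  (strictly_monotone v1 \/ strictly_monotone v2).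

(* Main.v *)
Require Import Defs.
From Stdlib Require Import Reals Lra Psatz Classical.
From Coquelicot Require Import Coquelicot.
Open Scope R_scope.


Definition fv (L a b : R) := a ^ 3 - a + L * b ^ 2 * a.
Definition limM (f : R -> R) (l : R) :=
  forall e, 0 < e -> exists M, forall z, z < M -> Rabs (f z - l) < e.
Definition limP (f : R -> R) (l : R) :=
  forall e, 0 < e -> exists M, forall z, M < z -> Rabs (f z - l) < e.

Lemma limM_of (f : R -> R) (l : R) : is_lim f m_infty l -> limM f l.
Proof.
  intros H e He. apply is_lim_spec in H. destruct (H (mkposreal e He)) as [M HM].
  exists M. intros z Hz. apply (HM z Hz).
Qed.
Lemma limP_of (f : R -> R) (l : R) : is_lim f p_infty l -> limP f l.
Proof.
  intros H e He. apply is_lim_spec in H. destruct (H (mkposreal e He)) as [M HM].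
  exists M. intros z Hz. apply (HM z Hz).
Qed.

Lemma dl_cont f x l : derivable_pt_lim f x l -> continuity_pt f x.
Proof. intros H. apply derivable_continuous_pt. exists l. exact H. Qed.

Lemma dl_shift f x t l : derivable_pt_lim f (x + t) l ->
  derivable_pt_lim (fun y => f (y + t)) x l.
Proof.
  intros H e He. destruct (H e He) as [d Hd]. exists d. intros h Hh Hhd.
  replace (x + h + t) with (x + t + h) by ring. apply Hd; auto.
Qed.

Lemma dl_sub f g x l1 l2 : derivable_pt_lim f x l1 -> derivable_pt_lim g x l2 ->
  derivable_pt_lim (fun y => f y - g y) x (l1 - l2).
Proof. intros H1 H2. apply (derivable_pt_lim_minus f g x l1 l2 H1 H2). Qed.

Lemma dl_opp f x l : derivable_pt_lim f x l -> derivable_pt_lim (fun y => - f y) x (- l).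
Proof. intros H. apply (derivable_pt_lim_opp f x l H). Qed.

Lemma dl_refl f x l : derivable_pt_lim f (- x) l -> derivable_pt_lim (fun y => f (- y)) x (- l).
Proof.
  intros H e He. destruct (H e He) as [d Hd]. exists d. intros h Hh Hhd.
  replace (- (x + h)) with (- x + - h) by ring.
  assert (Hh' : - h <> 0) by lra.
  assert (Hd' : Rabs (- h) < d) by (rewrite Rabs_Ropp; auto).
  specialize (Hd (- h) Hh' Hd').
  replace ((f (- x + - h) - f (- x)) / h - - l) with (- ((f (- x + - h) - f (- x)) / - h - l)).
  rewrite Rabs_Ropp; auto. field; auto.
Qed.

Lemma locmin_d2 (H H1 H2 : R -> R) z0 d :
  0 < d -> (forall y, derivable_pt_lim H y (H1 y)) ->
  derivable_pt_lim H1 z0 (H2 z0) ->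
  (forall y, Rabs (y - z0) < d -> H z0 <= H y) -> 0 <= H2 z0.
Proof.
  intros Hd HH HH1 Hmin. destruct (Rle_or_lt 0 (H2 z0)) as [|Hneg]; auto. exfalso.
  destruct (HH1 (- H2 z0 / 2)) as [d1 Hd1]. lra.
  assert (Hq : forall h, h <> 0 -> Rabs h < d1 -> (H1 (z0 + h) - H1 z0) / h < 0).
  { intros h Hh Hhd. specialize (Hd1 h Hh Hhd). apply Rabs_def2 in Hd1. lra. }
  set (h0 := Rmin d d1 / 2).
  assert (Hh0 : 0 < h0) by (unfold h0; pose proof (cond_pos d1); unfold Rmin; destruct (Rle_dec d d1); lra).
  assert (Hh0d : h0 < d).
  { unfold h0. pose proof (Rmin_l d d1). lra. }
  assert (Hh0d1 : h0 < d1).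
  { unfold h0. pose proof (Rmin_r d d1). pose proof (Rmin_l d d1). pose proof (cond_pos d1). unfold Rmin in *. destruct (Rle_dec d d1); lra. }
  destruct (Rle_or_lt (H1 z0) 0) as [Hs|Hs].
  - destruct (MVT_cor2 H H1 z0 (z0 + h0)) as [c [Hc1 Hc2]]. lra. intros; auto.
    assert (Hn : H1 c < 0).
    { assert (Hq' := Hq (c - z0)). replace (z0 + (c - z0)) with c in Hq' by ring.
      assert (Hx : (H1 c - H1 z0) / (c - z0) < 0). apply Hq'. lra.
      rewrite Rabs_right; lra.
      assert (Hx2 : H1 c - H1 z0 < 0).
      { replace (H1 c - H1 z0) with ((H1 c - H1 z0) / (c - z0) * (c - z0)) by (field; lra).
        nra. }
      lra. }
    assert (Hm := Hmin (z0 + h0)). replace (z0 + h0 - z0) with h0 in Hm by ring.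
    rewrite Rabs_right in Hm by lra. specialize (Hm Hh0d). nra.
  - destruct (MVT_cor2 H H1 (z0 - h0) z0) as [c [Hc1 Hc2]]. lra. intros; auto.
    assert (Hn : 0 < H1 c).
    { assert (Hq' := Hq (c - z0)). replace (z0 + (c - z0)) with c in Hq' by ring.
      assert (Hx : (H1 c - H1 z0) / (c - z0) < 0). apply Hq'. lra.
      rewrite Rabs_left; lra.
      assert (Hx2 : 0 < H1 c - H1 z0).
      { replace (H1 c - H1 z0) with ((H1 c - H1 z0) / (c - z0) * (c - z0)) by (field; lra).
        nra. }
      lra. }
    assert (Hm := Hmin (z0 - h0)). replace (z0 - h0 - z0) with (- h0) in Hm by ring.
    rewrite Rabs_Ropp, Rabs_right in Hm by lra. specialize (Hm Hh0d). nra.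
Qed.

Lemma deriv_min0 f x l : derivable_pt_lim f x l -> (forall y, f x <= f y) -> l = 0.
Proof.
  intros H Hm. destruct (Rtotal_order l 0) as [Hl|[Hl|Hl]]; auto; exfalso.
  - destruct (H (- l / 2)) as [d Hd]; [lra|].
    set (h := d / 2). assert (0 < h) by (unfold h; pose proof (cond_pos d); lra).
    assert (Hx : Rabs ((f (x + h) - f x) / h - l) < - l / 2).
    { apply Hd. lra. rewrite Rabs_right; unfold h; pose proof (cond_pos d); lra. }
    apply Rabs_def2 in Hx.
    assert (Hy : (f (x + h) - f x) / h < 0) by lra.
    assert (f (x + h) - f x < 0).
    { replace (f (x + h) - f x) with ((f (x + h) - f x) / h * h) by (field; lra). nra. }
    specialize (Hm (x + h)). lra.
  - destruct (H (l / 2)) as [d Hd]; [lra|].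
    set (h := - (d / 2)). assert (h < 0) by (unfold h; pose proof (cond_pos d); lra).
    assert (Hx : Rabs ((f (x + h) - f x) / h - l) < l / 2).
    { apply Hd. lra. rewrite Rabs_left; unfold h; pose proof (cond_pos d); lra. }
    apply Rabs_def2 in Hx.
    assert (Hy : 0 < (f (x + h) - f x) / h) by lra.
    assert (f (x + h) - f x < 0).
    { replace (f (x + h) - f x) with ((f (x + h) - f x) / h * h) by (field; lra). nra. }
    specialize (Hm (x + h)). lra.
Qed.


Definition Good (L x1 x2 y1 y2 : R) : Prop :=
  (x1 - y1 < 0 -> x1 - y1 <= y2 - x2 -> fv L x1 x2 - fv L y1 y2 < 0) /\
  (y2 - x2 < 0 -> y2 - x2 <= x1 - y1 -> fv L y2 y1 - fv L x2 x1 < 0).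

Lemma fv_id1 L x1 x2 y1 y2 : fv L x1 x2 - fv L y1 y2 =
  (x1 - y1) * (x1^2 + x1*y1 + y1^2 - 1 + L*x2^2) - L*y1*(x2+y2) * (y2 - x2).
Proof. unfold fv; ring. Qed.
Lemma fv_id2 L x1 x2 y1 y2 : fv L y2 y1 - fv L x2 x1 =
  (y2 - x2) * (y2^2 + y2*x2 + x2^2 - 1 + L*y1^2) - L*x2*(x1+y1) * (x1 - y1).
Proof. unfold fv; ring. Qed.

Lemma good_AB L x1 x2 y1 y2 :
  0 <= L*y1*(x2+y2) -> 0 <= L*x2*(x1+y1) ->
  L*y1*(x2+y2) < x1^2 + x1*y1 + y1^2 - 1 + L*x2^2 ->
  L*x2*(x1+y1) < y2^2 + y2*x2 + x2^2 - 1 + L*y1^2 ->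
  Good L x1 x2 y1 y2.
Proof.
  intros HB1 HB2 H1 H2. split; intros Ha Hb.
  - rewrite fv_id1. set (A := x1^2 + x1*y1 + y1^2 - 1 + L*x2^2) in *.
    set (B := L*y1*(x2+y2)) in *. set (d1 := x1 - y1) in *. set (d2 := y2 - x2) in *.
    assert (B * (d2 - d1) >= 0) by nra. nra.
  - rewrite fv_id2. set (A := y2^2 + y2*x2 + x2^2 - 1 + L*y1^2) in *.
    set (B := L*x2*(x1+y1)) in *. set (d1 := x1 - y1) in *. set (d2 := y2 - x2) in *.
    assert (B * (d1 - d2) >= 0) by nra. nra.
Qed.

Definition epsL (L : R) := (L - 1) / (8 * L * (L + 3)).

Lemma epsL_prop L : 1 < L -> 0 < epsL L /\ 0 < 2 - 6 * epsL L - 2 * L * epsL L /\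
  0 < L - 1 - 4 * L * epsL L /\ epsL L < 1/4.
Proof.
  intros HL. unfold epsL.
  assert (Hd : 0 < 8 * L * (L + 3)) by nra.
  assert (He : (L - 1) / (8 * L * (L + 3)) * (8 * L * (L + 3)) = L - 1) by (field; lra).
  set (e := (L - 1) / (8 * L * (L + 3))) in *.
  assert (0 < e). { unfold e. apply Rdiv_lt_0_compat; lra. }
  repeat split; auto; nra.
Qed.

Lemma sq_lb e x : 0 < 1 - e -> 1 - e < x -> 1 - 2 * e <= x ^ 2.
Proof. intros. nra. Qed.

Lemma good_R L e x1 x2 y1 y2 : 1 < L -> 0 < e ->
  0 < 2 - 6 * e - 2 * L * e -> 0 < L - 1 - 4 * L * e -> e < 1/4 ->
  1 - e < x1 < 1 -> 1 - e < y1 < 1 -> 0 < x2 < e -> 0 < y2 < e ->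
  Good L x1 x2 y1 y2.
Proof.
  intros HL He H1 H2 H3 Hx1 Hy1 Hx2 Hy2.
  assert (Sx1 := sq_lb e x1 ltac:(lra) ltac:(lra)).
  assert (Sy1 := sq_lb e y1 ltac:(lra) ltac:(lra)).
  apply good_AB.
  - apply Rmult_le_pos; [|lra]. apply Rmult_le_pos; lra.
  - apply Rmult_le_pos; [|lra]. apply Rmult_le_pos; lra.
  - assert (x1 * y1 >= 1 - 2*e) by nra.
    assert (L * y1 * (x2 + y2) <= L * (2 * e)).
    { assert (y1 * (x2 + y2) <= 2 * e) by nra. nra. }
    assert (0 <= L * x2 ^ 2) by (apply Rmult_le_pos; [lra|apply pow2_ge_0]). nra.
  - assert (L * x2 * (x1 + y1) <= L * (2 * e)).
    { assert (x2 * (x1 + y1) <= 2 * e) by nra. nra. }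
    assert (L * (1 - 2*e) <= L * y1 ^ 2) by (apply Rmult_le_compat_l; lra).
    assert (0 <= y2 ^ 2 + y2 * x2 + x2 ^ 2) by nra. nra.
Qed.

Lemma good_L L e x1 x2 y1 y2 : 1 < L -> 0 < e ->
  0 < 2 - 6 * e - 2 * L * e -> 0 < L - 1 - 4 * L * e -> e < 1/4 ->
  0 < x1 < e -> 0 < y1 < e -> 1 - e < x2 < 1 -> 1 - e < y2 < 1 ->
  Good L x1 x2 y1 y2.
Proof.
  intros HL He H1 H2 H3 Hx1 Hy1 Hx2 Hy2.
  assert (Sx2 := sq_lb e x2 ltac:(lra) ltac:(lra)).
  assert (Sy2 := sq_lb e y2 ltac:(lra) ltac:(lra)).
  apply good_AB.
  - apply Rmult_le_pos; [|lra]. apply Rmult_le_pos; lra.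
  - apply Rmult_le_pos; [|lra]. apply Rmult_le_pos; lra.
  - assert (L * y1 * (x2 + y2) <= L * (2 * e)).
    { assert (y1 * (x2 + y2) <= 2 * e) by nra. nra. }
    assert (L * (1 - 2*e) <= L * x2 ^ 2) by (apply Rmult_le_compat_l; lra).
    assert (0 <= x1 ^ 2 + x1 * y1 + y1 ^ 2) by nra. nra.
  - assert (x2 * y2 >= 1 - 2*e) by nra.
    assert (L * x2 * (x1 + y1) <= L * (2 * e)).
    { assert (x2 * (x1 + y1) <= 2 * e) by nra. nra. }
    assert (0 <= L * y1 ^ 2) by (apply Rmult_le_pos; [lra|apply pow2_ge_0]). nra.
Qed.

Lemma good_mixed L e dl x1 x2 y1 y2 : 1 < L -> 0 < e ->
  0 < 2 - 6 * e - 2 * L * e -> 0 < L - 1 - 4 * L * e -> e < 1/4 ->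
  0 < dl <= e -> 0 < y1 < dl -> 1 - e < y2 < 1 -> 0 < x1 < 1 -> 0 < x2 < 1 ->
  (x1 < dl -> x1 < e /\ 1 - e < x2) -> Good L x1 x2 y1 y2.
Proof.
  intros HL He H1 H2 H3 Hdl Hy1 Hy2 Hx1 Hx2 Himp.
  split; intros Ha Hb.
  - destruct (Himp ltac:(lra)) as [Hc Hd].
    apply (good_L L e x1 x2 y1 y2); auto; lra.
  - destruct (Rlt_or_le (x1 - y1) 0) as [Hc|Hc].
    + destruct (Himp ltac:(lra)) as [Hc1 Hd].
      apply (good_L L e x1 x2 y1 y2); auto; lra.
    + rewrite fv_id2.
      assert (0 <= L * x2 * (x1 + y1) * (x1 - y1)).
      { apply Rmult_le_pos; auto. apply Rmult_le_pos; [|lra]. apply Rmult_le_pos; lra. }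
      assert (Sy2 := sq_lb e y2 ltac:(lra) ltac:(lra)).
      assert (0 <= L * y1 ^ 2) by (apply Rmult_le_pos; [lra|apply pow2_ge_0]).
      assert (0 < y2 ^ 2 + y2 * x2 + x2 ^ 2 - 1 + L * y1 ^ 2) by nra.
      nra.
Qed.


Lemma Rmin_lip a b c d : Rabs (Rmin a b - Rmin c d) <= Rabs (a - c) + Rabs (b - d).
Proof. unfold Rmin; destruct (Rle_dec a b); destruct (Rle_dec c d);
  unfold Rabs; repeat destruct Rcase_abs; lra. Qed.

Lemma cont_eps f x : continuity_pt f x -> forall e, 0 < e ->
  exists d, 0 < d /\ forall y, Rabs (y - x) < d -> Rabs (f y - f x) < e.
Proof.
  intros H e He. destruct (H e He) as [d [Hd Hd2]]. exists d. split; auto.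
  intros y Hy. destruct (Req_dec y x) as [->|Hne].
  - rewrite Rminus_eq_0, Rabs_R0; auto.
  - apply (Hd2 y). split. split. exact I. intro Heq; apply Hne; auto. exact Hy.
Qed.

Lemma eps_cont f x : (forall e, 0 < e ->
  exists d, 0 < d /\ forall y, Rabs (y - x) < d -> Rabs (f y - f x) < e) -> continuity_pt f x.
Proof.
  intros H e He. destruct (H e He) as [d [Hd Hd2]]. exists d. split; auto.
  intros y [_ Hy]. apply Hd2. exact Hy.
Qed.

Lemma cont_min f g x : continuity_pt f x -> continuity_pt g x ->
  continuity_pt (fun y => Rmin (f y) (g y)) x.
Proof.
  intros Hf Hg. apply eps_cont. intros e He.
  destruct (cont_eps f x Hf (e/2)) as [d1 [Hd1 H1]]; [lra|].
  destruct (cont_eps g x Hg (e/2)) as [d2 [Hd2 H2]]; [lra|].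
  exists (Rmin d1 d2). split. apply Rmin_glb_lt; auto.
  intros y Hy. pose proof (Rmin_l d1 d2). pose proof (Rmin_r d1 d2).
  eapply Rle_lt_trans. apply Rmin_lip.
  assert (Rabs (f y - f x) < e/2) by (apply H1; lra).
  assert (Rabs (g y - g x) < e/2) by (apply H2; lra). lra.
Qed.

Lemma attain_min_right (g : R -> R) A z1 : (forall x, continuity_pt g x) -> limP g 0 ->
  A <= z1 -> g z1 < 0 ->
  exists z0, A <= z0 /\ g z0 <= g z1 /\ forall y, A <= y -> g z0 <= g y.
Proof.
  intros Hc Hl HA Hz. destruct (Hl (- g z1)) as [M HM]; [lra|].
  set (B := Rmax (M + 1) z1).
  destruct (continuity_ab_min g A B) as [z0 [Hz0 Hz0']].
  { unfold B. pose proof (Rmax_r (M+1) z1). lra. } { intros; auto. }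
  exists z0. split; [lra|]. split.
  { apply Hz0. unfold B. pose proof (Rmax_r (M+1) z1). lra. }
  intros y Hy. destruct (Rle_or_lt y B) as [Hb|Hb].
  - apply Hz0; lra.
  - assert (M < y) by (unfold B in Hb; pose proof (Rmax_l (M+1) z1); lra).
    specialize (HM y H). rewrite Rminus_0_r in HM. apply Rabs_def2 in HM.
    assert (g z0 <= g z1) by (apply Hz0; unfold B; pose proof (Rmax_r (M+1) z1); lra).
    lra.
Qed.

Lemma attain_min_left (g : R -> R) A z1 : (forall x, continuity_pt g x) -> limM g 0 ->
  z1 <= A -> g z1 < 0 ->
  exists z0, z0 <= A /\ g z0 <= g z1 /\ forall y, y <= A -> g z0 <= g y.
Proof.
  intros Hc Hl HA Hz. destruct (Hl (- g z1)) as [M HM]; [lra|].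
  set (B := Rmin (M - 1) z1).
  destruct (continuity_ab_min g B A) as [z0 [Hz0 Hz0']].
  { unfold B. pose proof (Rmin_r (M-1) z1). lra. } { intros; auto. }
  exists z0. split; [lra|]. split.
  { apply Hz0. unfold B. pose proof (Rmin_r (M-1) z1). lra. }
  intros y Hy. destruct (Rle_or_lt B y) as [Hb|Hb].
  - apply Hz0; lra.
  - assert (y < M) by (unfold B in Hb; pose proof (Rmin_l (M-1) z1); lra).
    specialize (HM y H). rewrite Rminus_0_r in HM. apply Rabs_def2 in HM.
    assert (g z0 <= g z1) by (apply Hz0; unfold B; pose proof (Rmin_r (M-1) z1); lra).
    lra.
Qed.

Lemma limP_min f g : limP f 0 -> limP g 0 -> limP (fun y => Rmin (f y) (g y)) 0.
Proof.
  intros Hf Hg e He. destruct (Hf (e/2)) as [M1 H1]; [lra|]. destruct (Hg (e/2)) as [M2 H2]; [lra|].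
  exists (Rmax M1 M2). intros z Hz. pose proof (Rmax_l M1 M2). pose proof (Rmax_r M1 M2).
  assert (Hq := Rmin_lip (f z) (g z) 0 0). replace (Rmin 0 0) with 0 in Hq by (unfold Rmin; destruct Rle_dec; lra). rewrite !Rminus_0_r in *.
  specialize (H1 z ltac:(lra)). specialize (H2 z ltac:(lra)). rewrite !Rminus_0_r in *. lra.
Qed.
Lemma limM_min f g : limM f 0 -> limM g 0 -> limM (fun y => Rmin (f y) (g y)) 0.
Proof.
  intros Hf Hg e He. destruct (Hf (e/2)) as [M1 H1]; [lra|]. destruct (Hg (e/2)) as [M2 H2]; [lra|].
  exists (Rmin M1 M2). intros z Hz. pose proof (Rmin_l M1 M2). pose proof (Rmin_r M1 M2).
  assert (Hq := Rmin_lip (f z) (g z) 0 0). replace (Rmin 0 0) with 0 in Hq by (unfold Rmin; destruct Rle_dec; lra). rewrite !Rminus_0_r in *.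
  specialize (H1 z ltac:(lra)). specialize (H2 z ltac:(lra)). rewrite !Rminus_0_r in *. lra.
Qed.

Lemma minp_right (d1 d2 e1 e2 F1 F2 : R -> R) A :
  (forall y, derivable_pt_lim d1 y (e1 y)) -> (forall y, derivable_pt_lim e1 y (F1 y)) ->
  (forall y, derivable_pt_lim d2 y (e2 y)) -> (forall y, derivable_pt_lim e2 y (F2 y)) ->
  limP d1 0 -> limP d2 0 ->
  (forall z, A < z -> (d1 z < 0 -> d1 z <= d2 z -> F1 z < 0) /\
                      (d2 z < 0 -> d2 z <= d1 z -> F2 z < 0)) ->
  0 <= d1 A -> 0 <= d2 A ->
  forall z, A <= z -> 0 <= d1 z /\ 0 <= d2 z.
Proof.
  intros D1 E1 D2 E2 L1 L2 HG HA1 HA2.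
  set (m := fun y => Rmin (d1 y) (d2 y)).
  assert (Hmc : forall x, continuity_pt m x).
  { intros x. apply cont_min; eapply dl_cont; eauto. }
  destruct (classic (exists z1, A <= z1 /\ m z1 < 0)) as [[z1 [Hz1 Hm1]]|Hno].
  - exfalso. destruct (attain_min_right m A z1 Hmc (limP_min d1 d2 L1 L2) Hz1 Hm1)
      as [z0 [Hz0 [Hz0m Hz0min]]].
    assert (HmA : 0 <= m A) by (unfold m; apply Rmin_glb; auto).
    assert (Hlt : A < z0).
    { destruct (Rle_lt_or_eq_dec A z0 Hz0); auto. subst z0. lra. }
    assert (Hloc : forall y, Rabs (y - z0) < z0 - A -> m z0 <= m y).
    { intros y Hy. apply Hz0min. apply Rabs_def2 in Hy. lra. }
    destruct (HG z0 Hlt) as [G1 G2].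
    unfold m in *. pose proof (Rmin_l (d1 z0) (d2 z0)). pose proof (Rmin_r (d1 z0) (d2 z0)).
    destruct (Rle_or_lt (d1 z0) (d2 z0)) as [Hc|Hc].
    + assert (Hm0 : Rmin (d1 z0) (d2 z0) = d1 z0) by (apply Rmin_left; auto).
      rewrite Hm0 in Hz0m, Hloc.
      assert (0 <= F1 z0).
      { apply (locmin_d2 d1 e1 F1 z0 (z0 - A)); auto. lra.
        intros y Hy. specialize (Hloc y Hy). pose proof (Rmin_l (d1 y) (d2 y)). lra. }
      assert (F1 z0 < 0) by (apply G1; lra). lra.
    + assert (Hm0 : Rmin (d1 z0) (d2 z0) = d2 z0) by (apply Rmin_right; lra).
      rewrite Hm0 in Hz0m, Hloc.
      assert (0 <= F2 z0).
      { apply (locmin_d2 d2 e2 F2 z0 (z0 - A)); auto. lra.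
        intros y Hy. specialize (Hloc y Hy). pose proof (Rmin_r (d1 y) (d2 y)). lra. }
      assert (F2 z0 < 0) by (apply G2; lra). lra.
  - intros z Hz. assert (0 <= m z).
    { destruct (Rle_or_lt 0 (m z)); auto. exfalso. apply Hno. exists z; auto. }
    unfold m in H. pose proof (Rmin_l (d1 z) (d2 z)). pose proof (Rmin_r (d1 z) (d2 z)). lra.
Qed.

Lemma minp_left (d1 d2 e1 e2 F1 F2 : R -> R) A :
  (forall y, derivable_pt_lim d1 y (e1 y)) -> (forall y, derivable_pt_lim e1 y (F1 y)) ->
  (forall y, derivable_pt_lim d2 y (e2 y)) -> (forall y, derivable_pt_lim e2 y (F2 y)) ->
  limM d1 0 -> limM d2 0 ->
  (forall z, z < A -> (d1 z < 0 -> d1 z <= d2 z -> F1 z < 0) /\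
                      (d2 z < 0 -> d2 z <= d1 z -> F2 z < 0)) ->
  0 <= d1 A -> 0 <= d2 A ->
  forall z, z <= A -> 0 <= d1 z /\ 0 <= d2 z.
Proof.
  intros D1 E1 D2 E2 L1 L2 HG HA1 HA2.
  set (m := fun y => Rmin (d1 y) (d2 y)).
  assert (Hmc : forall x, continuity_pt m x).
  { intros x. apply cont_min; eapply dl_cont; eauto. }
  destruct (classic (exists z1, z1 <= A /\ m z1 < 0)) as [[z1 [Hz1 Hm1]]|Hno].
  - exfalso. destruct (attain_min_left m A z1 Hmc (limM_min d1 d2 L1 L2) Hz1 Hm1)
      as [z0 [Hz0 [Hz0m Hz0min]]].
    assert (HmA : 0 <= m A) by (unfold m; apply Rmin_glb; auto).
    assert (Hlt : z0 < A).
    { destruct (Rle_lt_or_eq_dec z0 A Hz0); auto. subst z0. lra. }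
    assert (Hloc : forall y, Rabs (y - z0) < A - z0 -> m z0 <= m y).
    { intros y Hy. apply Hz0min. apply Rabs_def2 in Hy. lra. }
    destruct (HG z0 Hlt) as [G1 G2].
    unfold m in *. pose proof (Rmin_l (d1 z0) (d2 z0)). pose proof (Rmin_r (d1 z0) (d2 z0)).
    destruct (Rle_or_lt (d1 z0) (d2 z0)) as [Hc|Hc].
    + assert (Hm0 : Rmin (d1 z0) (d2 z0) = d1 z0) by (apply Rmin_left; auto).
      rewrite Hm0 in Hz0m, Hloc.
      assert (0 <= F1 z0).
      { apply (locmin_d2 d1 e1 F1 z0 (A - z0)); auto. lra.
        intros y Hy. specialize (Hloc y Hy). pose proof (Rmin_l (d1 y) (d2 y)). lra. }
      assert (F1 z0 < 0) by (apply G1; lra). lra.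
    + assert (Hm0 : Rmin (d1 z0) (d2 z0) = d2 z0) by (apply Rmin_right; lra).
      rewrite Hm0 in Hz0m, Hloc.
      assert (0 <= F2 z0).
      { apply (locmin_d2 d2 e2 F2 z0 (A - z0)); auto. lra.
        intros y Hy. specialize (Hloc y Hy). pose proof (Rmin_r (d1 y) (d2 y)). lra. }
      assert (F2 z0 < 0) by (apply G2; lra). lra.
  - intros z Hz. assert (0 <= m z).
    { destruct (Rle_or_lt 0 (m z)); auto. exfalso. apply Hno. exists z; auto. }
    unfold m in H. pose proof (Rmin_l (d1 z) (d2 z)). pose proof (Rmin_r (d1 z) (d2 z)). lra.
Qed.


Definition SolF (L : R) (v1 v2 p1 p2 : R -> R) : Prop :=
  (forall z, derivable_pt_lim v1 z (p1 z)) /\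
  (forall z, derivable_pt_lim p1 z (fv L (v1 z) (v2 z))) /\
  (forall z, derivable_pt_lim v2 z (p2 z)) /\
  (forall z, derivable_pt_lim p2 z (fv L (v2 z) (v1 z))) /\
  (forall z, 0 < v1 z) /\ (forall z, 0 < v2 z) /\
  limM v1 0 /\ limM v2 1 /\ limP v1 1 /\ limP v2 0.

Lemma attain_max_R (g : R -> R) a b z1 : (forall x, continuity_pt g x) ->
  limM g a -> limP g b -> a < g z1 -> b < g z1 -> exists z0, forall y, g y <= g z0.
Proof.
  intros Hc Ha Hb H1 H2.
  destruct (Ha (g z1 - a)) as [M1 HM1]; [lra|].
  destruct (Hb (g z1 - b)) as [M2 HM2]; [lra|].
  destruct (continuity_ab_maj g (Rmin M1 z1) (Rmax M2 z1)) as [z0 [Hz0 Hz0']].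
  { pose proof (Rmin_r M1 z1). pose proof (Rmax_r M2 z1). lra. } { intros; auto. }
  exists z0. intros y.
  assert (g z1 <= g z0) by (apply Hz0; pose proof (Rmin_r M1 z1); pose proof (Rmax_r M2 z1); lra).
  destruct (Rlt_or_le y (Rmin M1 z1)) as [Hy|Hy].
  - pose proof (Rmin_l M1 z1). specialize (HM1 y ltac:(lra)). apply Rabs_def2 in HM1. lra.
  - destruct (Rlt_or_le (Rmax M2 z1) y) as [Hy'|Hy'].
    + pose proof (Rmax_l M2 z1). specialize (HM2 y ltac:(lra)). apply Rabs_def2 in HM2. lra.
    + apply Hz0; lra.
Qed.

Lemma lt1_gen L f g p a b : 0 < L ->
  (forall z, derivable_pt_lim f z (p z)) -> (forall z, derivable_pt_lim p z (fv L (f z) (g z))) ->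
  (forall z, 0 < f z) -> (forall z, 0 < g z) -> limM f a -> limP f b -> a <= 1 -> b <= 1 ->
  forall z, f z < 1.
Proof.
  intros HL Df Dp Pf Pg La Lb Ha Hb z1. destruct (Rlt_or_le (f z1) 1) as [|Hz1]; auto. exfalso.
  assert (Hc : forall x, continuity_pt f x) by (intros; eapply dl_cont; eauto).
  assert (Hex : exists z0, 1 <= f z0 /\ forall y, f y <= f z0).
  { destruct (classic (exists z, 1 < f z)) as [[z Hz]|Hno].
    - assert (Ha' : a < f z) by lra. assert (Hb' : b < f z) by lra.
      destruct (attain_max_R f a b z Hc La Lb Ha' Hb') as [z0 Hz0].
      exists z0. split; auto. specialize (Hz0 z). lra.
    - exists z1. split; auto. intros y. destruct (Rle_or_lt (f y) 1); auto; [lra|].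
      exfalso; apply Hno; eauto. }
  destruct Hex as [z0 [Hz0 Hmax]].
  assert (H := locmin_d2 (fun y => - f y) (fun y => - p y) (fun y => - fv L (f y) (g y)) z0 1
     ltac:(lra) (fun y => dl_opp f y (p y) (Df y)) (dl_opp p z0 _ (Dp z0))).
  assert (0 <= - fv L (f z0) (g z0)).
  { apply H. intros y _. specialize (Hmax y). lra. }
  unfold fv in H0. specialize (Pg z0).
  assert (0 < L * g z0 ^ 2 * f z0).
  { apply Rmult_lt_0_compat. apply Rmult_lt_0_compat; auto. apply pow_lt; auto. lra. }
  assert (0 <= f z0 ^ 3 - f z0).
  { replace (f z0 ^ 3 - f z0) with (f z0 * (f z0 * f z0 - 1)) by ring.
    apply Rmult_le_pos. lra. nra. }
  lra.
Qed.

Lemma sol_lt1 L v1 v2 p1 p2 : 1 < L -> SolF L v1 v2 p1 p2 -> forall z, v1 z < 1 /\ v2 z < 1.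
Proof.
  intros HL [D1 [E1 [D2 [E2 [P1 [P2 [LM1 [LM2 [LP1 LP2]]]]]]]]] z. split.
  - apply (lt1_gen L v1 v2 p1 0 1); auto; lra.
  - apply (lt1_gen L v2 v1 p2 1 0); auto; lra.
Qed.

Lemma deriv_zero_fun f x l : (forall y, f y = 0) -> derivable_pt_lim f x l -> l = 0.
Proof.
  intros H D. apply (uniqueness_limite f x l 0 D).
  intros e He. exists (mkposreal 1 ltac:(lra)). intros h Hh _. rewrite !H.
  replace ((0 - 0) / h - 0) with 0 by (field; auto). rewrite Rabs_R0; auto.
Qed.

Lemma strong_local (phi p1 p2 : R -> R) K : 0 <= K ->
  (forall y, derivable_pt_lim phi y (p1 y)) -> (forall y, derivable_pt_lim p1 y (p2 y)) ->
  (forall y, 0 <= phi y) -> (forall y, p2 y <= K * phi y) ->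
  forall x, phi x = 0 -> forall y, x - / (K + 1) <= y <= x + / (K + 1) -> phi y = 0.
Proof.
  intros HK D1 D2 Hpos Hsup x Hx.
  set (h := / (K + 1)).
  assert (Hh : 0 < h) by (unfold h; apply Rinv_0_lt_compat; lra).
  assert (Hkh : K * h * h < 1).
  { unfold h. assert (Hk1 : (K + 1) * / (K+1) = 1) by (field; lra).
    assert (0 < / (K+1)) by (apply Rinv_0_lt_compat; lra).
    assert (/ (K+1) <= 1). { rewrite <- Rinv_1. apply Rinv_le_contravar; lra. }
    nra. }
  assert (Hp1x : p1 x = 0).
  { apply (deriv_min0 phi x); auto. intros y; rewrite Hx; auto. }
  assert (Hc : forall y, continuity_pt phi y) by (intros; eapply dl_cont; eauto).
  destruct (continuity_ab_maj phi (x - h) (x + h)) as [ym [Hym Hym']]. lra. intros; auto.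
  set (M := phi ym).
  assert (HM : 0 <= M) by apply Hpos.
  assert (Hbound : forall y, x - h <= y <= x + h -> phi y <= K * M * h * h).
  { intros y Hy. destruct (Rtotal_order y x) as [Hlt|[Heq|Hgt]].
    - destruct (MVT_cor2 phi p1 y x Hlt) as [c [Hc1 Hc2]]. intros; auto.
      destruct (MVT_cor2 p1 p2 c x) as [c' [Hc1' Hc2']]. lra. intros; auto.
      assert (p2 c' <= K * M).
      { eapply Rle_trans. apply Hsup. apply Rmult_le_compat_l; auto. apply Hym. lra. }
      rewrite Hp1x in Hc1'. rewrite Hx in Hc1.
      assert (0 <= K * M) by (apply Rmult_le_pos; auto).
      assert (p2 c' * (x - c) <= K * M * (x - c)) by (apply Rmult_le_compat_r; lra).
      assert (K * M * (x - c) <= K * M * h) by (apply Rmult_le_compat_l; lra).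
      assert (- p1 c <= K * M * h) by lra.
      assert (phi y = - p1 c * (x - y)) by lra.
      assert (- p1 c * (x - y) <= K * M * h * (x - y)) by (apply Rmult_le_compat_r; lra).
      assert (K * M * h * (x - y) <= K * M * h * h).
      { apply Rmult_le_compat_l; [|lra]. apply Rmult_le_pos; lra. }
      lra.
    - subst. rewrite Hx. assert (0 <= K * M) by (apply Rmult_le_pos; auto).
      assert (0 <= K * M * h) by (apply Rmult_le_pos; lra). apply Rmult_le_pos; lra.
    - destruct (MVT_cor2 phi p1 x y Hgt) as [c [Hc1 Hc2]]. intros; auto.
      destruct (MVT_cor2 p1 p2 x c) as [c' [Hc1' Hc2']]. lra. intros; auto.
      assert (p2 c' <= K * M).
      { eapply Rle_trans. apply Hsup. apply Rmult_le_compat_l; auto. apply Hym. lra. }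
      rewrite Hp1x in Hc1'. rewrite Hx in Hc1.
      assert (0 <= K * M) by (apply Rmult_le_pos; auto).
      assert (p2 c' * (c - x) <= K * M * (c - x)) by (apply Rmult_le_compat_r; lra).
      assert (K * M * (c - x) <= K * M * h) by (apply Rmult_le_compat_l; lra).
      assert (p1 c <= K * M * h) by lra.
      assert (phi y = p1 c * (y - x)) by lra.
      assert (p1 c * (y - x) <= K * M * h * (y - x)) by (apply Rmult_le_compat_r; lra).
      assert (K * M * h * (y - x) <= K * M * h * h).
      { apply Rmult_le_compat_l; [|lra]. apply Rmult_le_pos; lra. }
      lra. }
  assert (M <= K * M * h * h) by (apply Hbound; lra).
  assert (M * (1 - K * h * h) <= 0) by lra.
  assert (M <= 0).
  { destruct (Rle_or_lt M 0); auto. assert (0 < M * (1 - K * h * h)) by (apply Rmult_lt_0_compat; lra). lra. }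
  intros y Hy. assert (phi y <= M) by (apply Hym; lra). specialize (Hpos y). lra.
Qed.

Lemma strong_zero (phi p1 p2 : R -> R) K : 0 <= K ->
  (forall y, derivable_pt_lim phi y (p1 y)) -> (forall y, derivable_pt_lim p1 y (p2 y)) ->
  (forall y, 0 <= phi y) -> (forall y, p2 y <= K * phi y) ->
  forall x, phi x = 0 -> forall y, phi y = 0.
Proof.
  intros HK D1 D2 Hpos Hsup x Hx.
  set (h := / (K + 1)).
  assert (Hh : 0 < h) by (unfold h; apply Rinv_0_lt_compat; lra).
  assert (Hind : forall n : nat, forall y, Rabs (y - x) <= INR n * h -> phi y = 0).
  { induction n as [|n IH]; intros y Hy.
    - simpl in Hy. rewrite Rmult_0_l in Hy. assert (y = x).
      { pose proof (Rabs_pos (y - x)). assert (Rabs (y - x) = 0) by lra.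
        apply Rabs_eq_0 in H0. lra. }
      subst; auto.
    - rewrite S_INR in Hy. apply Rabs_le_between' in Hy as [Hy1 Hy2]. 
      pose proof (pos_INR n).
      destruct (Rle_or_lt (Rabs (y - x)) (INR n * h)) as [Hin|Hout].
      { apply IH; auto. }
      destruct (Rle_or_lt y x) as [Hyx|Hyx].
      + rewrite Rabs_left1 in Hout by lra.
        assert (phi (x - INR n * h) = 0).
        { apply IH. replace (x - INR n * h - x) with (- (INR n * h)) by ring.
          rewrite Rabs_Ropp, Rabs_right; nra. }
        apply (strong_local phi p1 p2 K HK D1 D2 Hpos Hsup _ H0).
        fold h. lra.
      + rewrite Rabs_right in Hout by lra.
        assert (phi (x + INR n * h) = 0).
        { apply IH. replace (x + INR n * h - x) with (INR n * h) by ring.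
          rewrite Rabs_right; nra. }
        apply (strong_local phi p1 p2 K HK D1 D2 Hpos Hsup _ H0).
        fold h. lra. }
  intros y. destruct (archimed_cor1 (h / (Rabs (y - x) + 1))) as [N [HN HN0]].
  { apply Rdiv_lt_0_compat; auto. pose proof (Rabs_pos (y - x)); lra. }
  apply (Hind N). assert (0 < INR N) by (apply lt_0_INR; auto).
  pose proof (Rabs_pos (y - x)).
  assert (Hq : 1 < h / (Rabs (y - x) + 1) * INR N).
  { assert (H1 := Rmult_lt_compat_r (INR N) _ _ H HN). rewrite Rinv_l in H1 by lra. exact H1. }
  assert (Hq2 : Rabs (y - x) + 1 < h * INR N).
  { replace (h * INR N) with (h / (Rabs (y - x) + 1) * INR N * (Rabs (y - x) + 1)) by (field; lra).
    assert (H2 := Rmult_lt_compat_r (Rabs (y - x) + 1) _ _ ltac:(lra) Hq). lra. }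
  lra.
Qed.

Lemma lip f f' a b K : (forall y, derivable_pt_lim f y (f' y)) ->
  (forall y, a <= y <= b -> Rabs (f' y) <= K) ->
  forall x y, a <= x <= b -> a <= y <= b -> Rabs (f x - f y) <= K * Rabs (x - y).
Proof.
  intros D HK x y Hx Hy. destruct (MVT_abs f f' y x) as [c [Hc1 Hc2]]. intros; auto.
  rewrite Hc1. apply Rmult_le_compat_r. apply Rabs_pos. apply HK.
  unfold Rmin, Rmax in Hc2. destruct Rle_dec; lra.
Qed.


Lemma limP_sh (f g : R -> R) l t : limP f l -> limP g l -> limP (fun y => f (y + t) - g y) 0.
Proof.
  intros Hf Hg e He. destruct (Hf (e/2)) as [M1 H1]; [lra|]. destruct (Hg (e/2)) as [M2 H2]; [lra|].
  exists (Rmax (M1 - t) M2). intros z Hz. pose proof (Rmax_l (M1 - t) M2). pose proof (Rmax_r (M1 - t) M2).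
  specialize (H1 (z + t) ltac:(lra)). specialize (H2 z ltac:(lra)).
  apply Rabs_def2 in H1. apply Rabs_def2 in H2. apply Rabs_def1; lra.
Qed.
Lemma limM_sh (f g : R -> R) l t : limM f l -> limM g l -> limM (fun y => f (y + t) - g y) 0.
Proof.
  intros Hf Hg e He. destruct (Hf (e/2)) as [M1 H1]; [lra|]. destruct (Hg (e/2)) as [M2 H2]; [lra|].
  exists (Rmin (M1 - t) M2). intros z Hz. pose proof (Rmin_l (M1 - t) M2). pose proof (Rmin_r (M1 - t) M2).
  specialize (H1 (z + t) ltac:(lra)). specialize (H2 z ltac:(lra)).
  apply Rabs_def2 in H1. apply Rabs_def2 in H2. apply Rabs_def1; lra.
Qed.
Lemma limP_sh' (f g : R -> R) l t : limP f l -> limP g l -> limP (fun y => g y - f (y + t)) 0.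
Proof.
  intros Hf Hg e He. destruct (limP_sh f g l t Hf Hg e He) as [M HM]. exists M. intros z Hz.
  specialize (HM z Hz). rewrite Rminus_0_r in *. rewrite Rabs_minus_sym. auto.
Qed.
Lemma limM_sh' (f g : R -> R) l t : limM f l -> limM g l -> limM (fun y => g y - f (y + t)) 0.
Proof.
  intros Hf Hg e He. destruct (limM_sh f g l t Hf Hg e He) as [M HM]. exists M. intros z Hz.
  specialize (HM z Hz). rewrite Rminus_0_r in *. rewrite Rabs_minus_sym. auto.
Qed.

Lemma sol_maxp_right L v1 v2 p1 p2 w1 w2 q1 q2 t A :
  SolF L v1 v2 p1 p2 -> SolF L w1 w2 q1 q2 ->
  (forall z, A < z -> Good L (v1 (z + t)) (v2 (z + t)) (w1 z) (w2 z)) ->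
  0 <= v1 (A + t) - w1 A -> 0 <= w2 A - v2 (A + t) ->
  forall z, A <= z -> 0 <= v1 (z + t) - w1 z /\ 0 <= w2 z - v2 (z + t).
Proof.
  intros [D1 [E1 [D2 [E2 [P1 [P2 [LM1 [LM2 [LP1 LP2]]]]]]]]]
         [D1' [E1' [D2' [E2' [P1' [P2' [LM1' [LM2' [LP1' LP2']]]]]]]]] HG HA1 HA2.
  apply (minp_right (fun y => v1 (y + t) - w1 y) (fun y => w2 y - v2 (y + t))
    (fun y => p1 (y + t) - q1 y) (fun y => q2 y - p2 (y + t))
    (fun y => fv L (v1 (y + t)) (v2 (y + t)) - fv L (w1 y) (w2 y))
    (fun y => fv L (w2 y) (w1 y) - fv L (v2 (y + t)) (v1 (y + t))) A).
  - intros y. apply (dl_sub (fun y => v1 (y + t)) w1). apply dl_shift; auto. auto.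
  - intros y. apply (dl_sub (fun y => p1 (y + t)) q1). apply dl_shift; auto. auto.
  - intros y. apply (dl_sub w2 (fun y => v2 (y + t))). auto. apply dl_shift; auto.
  - intros y. apply (dl_sub q2 (fun y => p2 (y + t))). auto. apply dl_shift; auto.
  - apply limP_sh with 1; auto.
  - apply limP_sh' with 0; auto.
  - intros z Hz. destruct (HG z Hz) as [G1 G2]. split; auto.
  - auto.
  - auto.
Qed.

Lemma sol_maxp_left L v1 v2 p1 p2 w1 w2 q1 q2 t A :
  SolF L v1 v2 p1 p2 -> SolF L w1 w2 q1 q2 ->
  (forall z, z < A -> Good L (v1 (z + t)) (v2 (z + t)) (w1 z) (w2 z)) ->
  0 <= v1 (A + t) - w1 A -> 0 <= w2 A - v2 (A + t) ->
  forall z, z <= A -> 0 <= v1 (z + t) - w1 z /\ 0 <= w2 z - v2 (z + t).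
Proof.
  intros [D1 [E1 [D2 [E2 [P1 [P2 [LM1 [LM2 [LP1 LP2]]]]]]]]]
         [D1' [E1' [D2' [E2' [P1' [P2' [LM1' [LM2' [LP1' LP2']]]]]]]]] HG HA1 HA2.
  apply (minp_left (fun y => v1 (y + t) - w1 y) (fun y => w2 y - v2 (y + t))
    (fun y => p1 (y + t) - q1 y) (fun y => q2 y - p2 (y + t))
    (fun y => fv L (v1 (y + t)) (v2 (y + t)) - fv L (w1 y) (w2 y))
    (fun y => fv L (w2 y) (w1 y) - fv L (v2 (y + t)) (v1 (y + t))) A).
  - intros y. apply (dl_sub (fun y => v1 (y + t)) w1). apply dl_shift; auto. auto.
  - intros y. apply (dl_sub (fun y => p1 (y + t)) q1). apply dl_shift; auto. auto.
  - intros y. apply (dl_sub w2 (fun y => v2 (y + t))). auto. apply dl_shift; auto.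
  - intros y. apply (dl_sub q2 (fun y => p2 (y + t))). auto. apply dl_shift; auto.
  - apply limM_sh with 0; auto.
  - apply limM_sh' with 1; auto.
  - intros z Hz. destruct (HG z Hz) as [G1 G2]. split; auto.
  - auto.
  - auto.
Qed.

Lemma ineq_K1 L x1 x2 y1 y2 : 1 < L -> 0 < x1 < 1 -> 0 < x2 < 1 -> 0 < y1 < 1 -> 0 < y2 < 1 ->
  0 <= x1 - y1 -> 0 <= y2 - x2 -> fv L x1 x2 - fv L y1 y2 <= (3 + L) * (x1 - y1).
Proof.
  intros. rewrite fv_id1.
  assert (0 <= L * y1 * (x2 + y2) * (y2 - x2)).
  { apply Rmult_le_pos; auto. apply Rmult_le_pos; [|lra]. apply Rmult_le_pos; lra. }
  assert (x1 ^ 2 + x1 * y1 + y1 ^ 2 - 1 + L * x2 ^ 2 <= 3 + L).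
  { assert (L * x2 ^ 2 <= L) by (assert (x2 ^ 2 <= 1) by nra; nra). nra. }
  assert ((x1 - y1) * (x1 ^ 2 + x1 * y1 + y1 ^ 2 - 1 + L * x2 ^ 2) <= (x1 - y1) * (3 + L))
    by (apply Rmult_le_compat_l; auto).
  lra.
Qed.
Lemma ineq_K2 L x1 x2 y1 y2 : 1 < L -> 0 < x1 < 1 -> 0 < x2 < 1 -> 0 < y1 < 1 -> 0 < y2 < 1 ->
  0 <= x1 - y1 -> 0 <= y2 - x2 -> fv L y2 y1 - fv L x2 x1 <= (3 + L) * (y2 - x2).
Proof.
  intros. rewrite fv_id2.
  assert (0 <= L * x2 * (x1 + y1) * (x1 - y1)).
  { apply Rmult_le_pos; auto. apply Rmult_le_pos; [|lra]. apply Rmult_le_pos; lra. }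
  assert (y2 ^ 2 + y2 * x2 + x2 ^ 2 - 1 + L * y1 ^ 2 <= 3 + L).
  { assert (L * y1 ^ 2 <= L) by (assert (y1 ^ 2 <= 1) by nra; nra). nra. }
  assert ((y2 - x2) * (y2 ^ 2 + y2 * x2 + x2 ^ 2 - 1 + L * y1 ^ 2) <= (y2 - x2) * (3 + L))
    by (apply Rmult_le_compat_l; auto).
  lra.
Qed.
Lemma eq_F1 L x1 x2 y1 y2 : 1 < L -> 0 < x2 -> 0 < y1 -> 0 < y2 -> x1 = y1 ->
  fv L x1 x2 - fv L y1 y2 = 0 -> x2 = y2.
Proof.
  intros HL H1 H2 H3 He Hf. rewrite fv_id1 in Hf. subst x1. rewrite Rminus_diag in Hf.
  assert (0 < L * y1 * (x2 + y2)).
  { apply Rmult_lt_0_compat; [|lra]. apply Rmult_lt_0_compat; lra. }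
  assert (L * y1 * (x2 + y2) * (y2 - x2) = 0) by lra.
  apply Rmult_integral in H0 as [|]; lra.
Qed.
Lemma eq_F2 L x1 x2 y1 y2 : 1 < L -> 0 < x1 -> 0 < x2 -> 0 < y1 -> x2 = y2 ->
  fv L y2 y1 - fv L x2 x1 = 0 -> x1 = y1.
Proof.
  intros HL H1 H2 H3 He Hf. rewrite fv_id2 in Hf. subst x2. rewrite Rminus_diag in Hf.
  assert (0 < L * y2 * (x1 + y1)).
  { apply Rmult_lt_0_compat; [|lra]. apply Rmult_lt_0_compat; lra. }
  assert (L * y2 * (x1 + y1) * (x1 - y1) = 0) by lra.
  apply Rmult_integral in H0 as [|]; lra.
Qed.

Lemma dichot L v1 v2 p1 p2 w1 w2 q1 q2 t : 1 < L ->
  SolF L v1 v2 p1 p2 -> SolF L w1 w2 q1 q2 ->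
  (forall z, 0 <= v1 (z + t) - w1 z /\ 0 <= w2 z - v2 (z + t)) ->
  (forall z, 0 < v1 (z + t) - w1 z /\ 0 < w2 z - v2 (z + t)) \/
  (forall z, w1 z = v1 (z + t) /\ w2 z = v2 (z + t)).
Proof.
  intros HL Sv Sw HP.
  pose proof (sol_lt1 L v1 v2 p1 p2 HL Sv) as Bv. pose proof (sol_lt1 L w1 w2 q1 q2 HL Sw) as Bw.
  destruct Sv as [D1 [E1 [D2 [E2 [P1 [P2 [LM1 [LM2 [LP1 LP2]]]]]]]]].
  destruct Sw as [D1' [E1' [D2' [E2' [P1' [P2' [LM1' [LM2' [LP1' LP2']]]]]]]]].
  set (d1 := fun y => v1 (y + t) - w1 y). set (d2 := fun y => w2 y - v2 (y + t)).
  set (e1 := fun y => p1 (y + t) - q1 y). set (e2 := fun y => q2 y - p2 (y + t)).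
  set (F1 := fun y => fv L (v1 (y + t)) (v2 (y + t)) - fv L (w1 y) (w2 y)).
  set (F2 := fun y => fv L (w2 y) (w1 y) - fv L (v2 (y + t)) (v1 (y + t))).
  assert (Dd1 : forall y, derivable_pt_lim d1 y (e1 y)).
  { intros y. apply (dl_sub (fun y => v1 (y + t)) w1). apply dl_shift; auto. auto. }
  assert (De1 : forall y, derivable_pt_lim e1 y (F1 y)).
  { intros y. apply (dl_sub (fun y => p1 (y + t)) q1). apply dl_shift; auto. auto. }
  assert (Dd2 : forall y, derivable_pt_lim d2 y (e2 y)).
  { intros y. apply (dl_sub w2 (fun y => v2 (y + t))). auto. apply dl_shift; auto. }
  assert (De2 : forall y, derivable_pt_lim e2 y (F2 y)).
  { intros y. apply (dl_sub q2 (fun y => p2 (y + t))). auto. apply dl_shift; auto. }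
  assert (HK : 0 <= 3 + L) by lra.
  assert (S1 : forall y, F1 y <= (3 + L) * d1 y).
  { intros y. destruct (HP y). unfold F1, d1.
    destruct (Bv (y + t)); destruct (Bw y).
    apply ineq_K1; auto; split; auto. }
  assert (S2 : forall y, F2 y <= (3 + L) * d2 y).
  { intros y. destruct (HP y). unfold F2, d2.
    destruct (Bv (y + t)); destruct (Bw y).
    apply ineq_K2; auto; split; auto. }
  assert (Z1 : forall x, d1 x = 0 -> forall z, w1 z = v1 (z + t) /\ w2 z = v2 (z + t)).
  { intros x Hx. assert (H0 := strong_zero d1 e1 F1 (3 + L) HK Dd1 De1 (fun y => proj1 (HP y)) S1 x Hx).
    assert (He : forall y, e1 y = 0) by (intros y; apply (deriv_zero_fun d1 y); auto).
    assert (HF : forall y, F1 y = 0) by (intros y; apply (deriv_zero_fun e1 y); auto).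
    intros z. specialize (H0 z). specialize (HF z). unfold d1, F1 in *.
    split. lra. symmetry. apply (eq_F1 L (v1 (z + t)) _ (w1 z)); auto. lra. }
  assert (Z2 : forall x, d2 x = 0 -> forall z, w1 z = v1 (z + t) /\ w2 z = v2 (z + t)).
  { intros x Hx. assert (H0 := strong_zero d2 e2 F2 (3 + L) HK Dd2 De2 (fun y => proj2 (HP y)) S2 x Hx).
    assert (He : forall y, e2 y = 0) by (intros y; apply (deriv_zero_fun d2 y); auto).
    assert (HF : forall y, F2 y = 0) by (intros y; apply (deriv_zero_fun e2 y); auto).
    intros z. specialize (H0 z). specialize (HF z). unfold d2, F2 in *.
    split. symmetry. apply (eq_F2 L (v1 (z + t)) (v2 (z + t)) (w1 z) (w2 z)); auto. lra. lra. }
  destruct (classic (exists x, d1 x = 0 \/ d2 x = 0)) as [[x [Hx|Hx]]|Hno].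
  - right. apply (Z1 x Hx).
  - right. apply (Z2 x Hx).
  - left. intros z. destruct (HP z) as [H1 H2]. split.
    + destruct H1 as [|H1]; auto. exfalso; apply Hno. exists z. left. unfold d1. auto.
    + destruct H2 as [|H2]; auto. exfalso; apply Hno. exists z. right. unfold d2. auto.
Qed.


Lemma near_left f g : limM f 0 -> limM g 1 -> forall e, 0 < e ->
  exists M, forall y, y < M -> f y < e /\ 1 - e < g y.
Proof.
  intros Hf Hg e He. destruct (Hf e He) as [M1 H1]. destruct (Hg e He) as [M2 H2].
  exists (Rmin M1 M2). intros y Hy. pose proof (Rmin_l M1 M2). pose proof (Rmin_r M1 M2).
  specialize (H1 y ltac:(lra)). specialize (H2 y ltac:(lra)).
  apply Rabs_def2 in H1. apply Rabs_def2 in H2. lra.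
Qed.
Lemma near_right f g : limP f 1 -> limP g 0 -> forall e, 0 < e ->
  exists M, forall y, M < y -> 1 - e < f y /\ g y < e.
Proof.
  intros Hf Hg e He. destruct (Hf e He) as [M1 H1]. destruct (Hg e He) as [M2 H2].
  exists (Rmax M1 M2). intros y Hy. pose proof (Rmax_l M1 M2). pose proof (Rmax_r M1 M2).
  specialize (H1 y ltac:(lra)). specialize (H2 y ltac:(lra)).
  apply Rabs_def2 in H1. apply Rabs_def2 in H2. lra.
Qed.

Definition Pord (v1 v2 w1 w2 : R -> R) (t : R) :=
  forall z, 0 <= v1 (z + t) - w1 z /\ 0 <= w2 z - v2 (z + t).

Lemma stepA L v1 v2 p1 p2 w1 w2 q1 q2 : 1 < L ->
  SolF L v1 v2 p1 p2 -> SolF L w1 w2 q1 q2 -> (forall x y, x < y -> v1 x < v1 y) ->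
  exists T, forall t, T <= t -> Pord v1 v2 w1 w2 t.
Proof.
  intros HL Sv Sw Hmon.
  pose proof (sol_lt1 L v1 v2 p1 p2 HL Sv) as Bv. pose proof (sol_lt1 L w1 w2 q1 q2 HL Sw) as Bw.
  pose proof Sv as Sv0. pose proof Sw as Sw0.
  destruct Sv as [D1 [E1 [D2 [E2 [P1 [P2 [LM1 [LM2 [LP1 LP2]]]]]]]]].
  destruct Sw as [D1' [E1' [D2' [E2' [P1' [P2' [LM1' [LM2' [LP1' LP2']]]]]]]]].
  destruct (epsL_prop L HL) as [He [He1 [He2 He3]]]. set (e := epsL L) in *.
  destruct (near_left v1 v2 LM1 LM2 e He) as [Mv HMv].
  set (dl := Rmin e (v1 (Mv - 1))).
  assert (Hdl : 0 < dl <= e).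
  { unfold dl. split. apply Rmin_glb_lt; auto. apply Rmin_l. }
  assert (Himp : forall y, v1 y < dl -> v1 y < e /\ 1 - e < v2 y).
  { intros y Hy. apply HMv. destruct (Rlt_or_le y (Mv - 1)) as [|Hy']; [lra|].
    exfalso. assert (v1 (Mv - 1) <= v1 y).
    { destruct (Rle_lt_or_eq_dec _ _ Hy') as [Hlt|Heq]. left; apply Hmon; auto. rewrite Heq; lra. }
    pose proof (Rmin_r e (v1 (Mv - 1))). fold dl in H0. lra. }
  destruct (near_left w1 w2 LM1' LM2' dl (proj1 Hdl)) as [Mw HMw].
  destruct (near_right w1 w2 LP1' LP2' e He) as [Nw HNw].
  set (A := Mw - 1). set (B := Rmax (Nw + 1) A).
  assert (HAB : A <= B) by apply Rmax_r.
  assert (Cw1 : forall x, continuity_pt w1 x) by (intros; eapply dl_cont; eauto).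
  assert (Cw2 : forall x, continuity_pt w2 x) by (intros; eapply dl_cont; eauto).
  destruct (continuity_ab_maj w1 A B HAB) as [a1 [Ha1 Ha1']]. intros; auto.
  destruct (continuity_ab_min w2 A B HAB) as [a2 [Ha2 Ha2']]. intros; auto.
  destruct (Bw a1) as [Hw1a1 _]. pose proof (P2' a2) as P2a2.
  destruct (LP1 (1 - w1 a1)) as [Y1 HY1]; [lra|].
  destruct (LP2 (w2 a2)) as [Y2 HY2]; [lra|].
  destruct (near_right v1 v2 LP1 LP2 e He) as [Nv HNv].
  set (Y := Rmax (Rmax Y1 Y2) Nv).
  assert (HY1' : Y1 <= Y) by (unfold Y; pose proof (Rmax_l (Rmax Y1 Y2) Nv); pose proof (Rmax_l Y1 Y2); lra).
  assert (HY2' : Y2 <= Y) by (unfold Y; pose proof (Rmax_l (Rmax Y1 Y2) Nv); pose proof (Rmax_r Y1 Y2); lra).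
  assert (HNv' : Nv <= Y) by (unfold Y; apply Rmax_r).
  exists (Y - A + 1). intros t Ht.
  assert (Hmid : forall z, A <= z <= B -> 0 <= v1 (z + t) - w1 z /\ 0 <= w2 z - v2 (z + t)).
  { intros z Hz. specialize (HY1 (z + t) ltac:(lra)). specialize (HY2 (z + t) ltac:(lra)).
    apply Rabs_def2 in HY1. apply Rabs_def2 in HY2.
    specialize (Ha1 z Hz). specialize (Ha2 z Hz). lra. }
  intros z. destruct (Rle_or_lt z A) as [HzA|HzA].
  - apply (sol_maxp_left L v1 v2 p1 p2 w1 w2 q1 q2 t A Sv0 Sw0); auto.
    + intros z' Hz'. destruct (HMw z' ltac:(unfold A in Hz'; lra)) as [Hw1 Hw2].
      destruct (Bv (z' + t)). destruct (Bw z').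
      pose proof (P1 (z' + t)). pose proof (P2 (z' + t)). pose proof (P1' z'). pose proof (P2' z').
      apply (good_mixed L e dl); try lra; try (split; lra). apply Himp.
    + apply Hmid; lra.
    + apply Hmid; lra.
  - destruct (Rle_or_lt z B) as [HzB|HzB].
    + apply Hmid; lra.
    + apply (sol_maxp_right L v1 v2 p1 p2 w1 w2 q1 q2 t B Sv0 Sw0); try lra.
      * intros z' Hz'. assert (Nw < z') by (unfold B in Hz'; pose proof (Rmax_l (Nw + 1) A); lra).
        destruct (HNw z' H) as [Hw1 Hw2].
        destruct (HNv (z' + t)) as [Hv1 Hv2]. unfold B in Hz'; pose proof (Rmax_r (Nw + 1) A). lra.
        destruct (Bv (z' + t)). destruct (Bw z').
        pose proof (P1 (z' + t)). pose proof (P2 (z' + t)). pose proof (P1' z'). pose proof (P2' z').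
        apply (good_R L e); try lra; split; lra.
      * apply Hmid; lra.
      * apply Hmid; lra.
Qed.


Lemma cont_abs f x : continuity_pt f x -> continuity_pt (fun y => Rabs (f y)) x.
Proof. intros H. apply (continuity_pt_comp f Rabs x H). apply Rcontinuity_abs. Qed.

Lemma stepE L v1 v2 p1 p2 w1 w2 q1 q2 ts : 1 < L ->
  SolF L v1 v2 p1 p2 -> SolF L w1 w2 q1 q2 ->
  (forall z, 0 < v1 (z + ts) - w1 z /\ 0 < w2 z - v2 (z + ts)) ->
  exists ep, 0 < ep /\ forall s, ts - ep <= s <= ts -> Pord v1 v2 w1 w2 s.
Proof.
  intros HL Sv Sw Hstr.
  pose proof (sol_lt1 L v1 v2 p1 p2 HL Sv) as Bv. pose proof (sol_lt1 L w1 w2 q1 q2 HL Sw) as Bw.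
  pose proof Sv as Sv0. pose proof Sw as Sw0.
  destruct Sv as [D1 [E1 [D2 [E2 [P1 [P2 [LM1 [LM2 [LP1 LP2]]]]]]]]].
  destruct Sw as [D1' [E1' [D2' [E2' [P1' [P2' [LM1' [LM2' [LP1' LP2']]]]]]]]].
  destruct (epsL_prop L HL) as [He [He1 [He2 He3]]]. set (e := epsL L) in *.
  destruct (near_left v1 v2 LM1 LM2 e He) as [Mv HMv].
  destruct (near_left w1 w2 LM1' LM2' e He) as [Mw HMw].
  destruct (near_right v1 v2 LP1 LP2 e He) as [Nv HNv].
  destruct (near_right w1 w2 LP1' LP2' e He) as [Nw HNw].
  set (A := Rmin Mw (Mv - ts) - 1).
  set (B := Rmax (Rmax Nw (Nv - ts + 1)) A + 1).
  assert (HA1 : A < Mw) by (unfold A; pose proof (Rmin_l Mw (Mv - ts)); lra).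
  assert (HA2 : A + ts < Mv) by (unfold A; pose proof (Rmin_r Mw (Mv - ts)); lra).
  assert (HB0 : A < B) by (unfold B; pose proof (Rmax_r (Rmax Nw (Nv - ts + 1)) A); lra).
  assert (HB1 : Nw < B) by (unfold B; pose proof (Rmax_l (Rmax Nw (Nv - ts + 1)) A);
                            pose proof (Rmax_l Nw (Nv - ts + 1)); lra).
  assert (HB2 : Nv - ts + 1 < B) by (unfold B; pose proof (Rmax_l (Rmax Nw (Nv - ts + 1)) A);
                            pose proof (Rmax_r Nw (Nv - ts + 1)); lra).
  assert (Cd1 : forall x, continuity_pt (fun y => v1 (y + ts) - w1 y) x).
  { intros x. eapply dl_cont. apply (dl_sub (fun y => v1 (y + ts)) w1). apply dl_shift; auto. auto. }
  assert (Cd2 : forall x, continuity_pt (fun y => w2 y - v2 (y + ts)) x).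
  { intros x. eapply dl_cont. apply (dl_sub w2 (fun y => v2 (y + ts))). auto. apply dl_shift; auto. }
  destruct (continuity_ab_min _ A B ltac:(lra) (fun c _ => Cd1 c)) as [m1 [Hm1 Hm1']].
  destruct (continuity_ab_min _ A B ltac:(lra) (fun c _ => Cd2 c)) as [m2 [Hm2 Hm2']].
  set (mu := Rmin (v1 (m1 + ts) - w1 m1) (w2 m2 - v2 (m2 + ts))).
  assert (Hmu : 0 < mu) by (unfold mu; apply Rmin_glb_lt; apply Hstr).
  assert (Hmu1 : mu <= v1 (m1 + ts) - w1 m1) by apply Rmin_l.
  assert (Hmu2 : mu <= w2 m2 - v2 (m2 + ts)) by apply Rmin_r.
  assert (Cp1 : forall x, continuity_pt (fun y => Rabs (p1 y)) x).
  { intros x. apply cont_abs. eapply dl_cont; eauto. }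
  assert (Cp2 : forall x, continuity_pt (fun y => Rabs (p2 y)) x).
  { intros x. apply cont_abs. eapply dl_cont; eauto. }
  destruct (continuity_ab_maj _ (A + ts - 1) (B + ts) ltac:(lra) (fun c _ => Cp1 c)) as [k1 [Hk1 Hk1']].
  destruct (continuity_ab_maj _ (A + ts - 1) (B + ts) ltac:(lra) (fun c _ => Cp2 c)) as [k2 [Hk2 Hk2']].
  set (K1 := Rabs (p1 k1)). set (K2 := Rabs (p2 k2)).
  assert (HK1 : 0 <= K1) by apply Rabs_pos. assert (HK2 : 0 <= K2) by apply Rabs_pos.
  set (ep := Rmin (1/2) (mu / (K1 + K2 + 1))).
  assert (Hq : 0 < mu / (K1 + K2 + 1)) by (apply Rdiv_lt_0_compat; lra).
  assert (Hep : 0 < ep) by (unfold ep; apply Rmin_glb_lt; lra).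
  assert (Hep1 : ep <= 1/2) by apply Rmin_l.
  assert (Hep2 : ep <= mu / (K1 + K2 + 1)) by apply Rmin_r.
  assert (HK1ep : K1 * ep < mu).
  { assert (K1 * ep <= K1 * (mu / (K1 + K2 + 1))) by (apply Rmult_le_compat_l; auto).
    assert (K1 * (mu / (K1 + K2 + 1)) < mu).
    { replace (K1 * (mu / (K1 + K2 + 1))) with (mu * (K1 / (K1 + K2 + 1))) by (field; lra).
      assert (K1 / (K1 + K2 + 1) < 1).
      { apply (Rmult_lt_reg_r (K1 + K2 + 1)). lra. unfold Rdiv. rewrite Rmult_assoc, Rinv_l; lra. }
      nra. }
    lra. }
  assert (HK2ep : K2 * ep < mu).
  { assert (K2 * ep <= K2 * (mu / (K1 + K2 + 1))) by (apply Rmult_le_compat_l; auto).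
    assert (K2 * (mu / (K1 + K2 + 1)) < mu).
    { replace (K2 * (mu / (K1 + K2 + 1))) with (mu * (K2 / (K1 + K2 + 1))) by (field; lra).
      assert (K2 / (K1 + K2 + 1) < 1).
      { apply (Rmult_lt_reg_r (K1 + K2 + 1)). lra. unfold Rdiv. rewrite Rmult_assoc, Rinv_l; lra. }
      nra. }
    lra. }
  exists ep. split; auto. intros s Hs.
  assert (Hmid : forall z, A <= z <= B -> 0 <= v1 (z + s) - w1 z /\ 0 <= w2 z - v2 (z + s)).
  { intros z Hz.
    assert (L1 : Rabs (v1 (z + s) - v1 (z + ts)) <= K1 * Rabs (z + s - (z + ts))).
    { apply (lip v1 p1 (A + ts - 1) (B + ts) K1 D1). intros y Hy; apply Hk1; auto. lra. lra. }
    assert (L2 : Rabs (v2 (z + s) - v2 (z + ts)) <= K2 * Rabs (z + s - (z + ts))).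
    { apply (lip v2 p2 (A + ts - 1) (B + ts) K2 D2). intros y Hy; apply Hk2; auto. lra. lra. }
    replace (z + s - (z + ts)) with (- (ts - s)) in L1, L2 by ring.
    rewrite Rabs_Ropp, (Rabs_right (ts - s)) in L1, L2 by lra.
    assert (K1 * (ts - s) <= K1 * ep) by (apply Rmult_le_compat_l; lra).
    assert (K2 * (ts - s) <= K2 * ep) by (apply Rmult_le_compat_l; lra).
    apply Rabs_le_between' in L1. apply Rabs_le_between' in L2.
    specialize (Hm1 z Hz). specialize (Hm2 z Hz). cbv beta in Hm1, Hm2. lra. }
  intros z. destruct (Rle_or_lt z A) as [HzA|HzA].
  - apply (sol_maxp_left L v1 v2 p1 p2 w1 w2 q1 q2 s A Sv0 Sw0); auto.
    + intros z' Hz'. destruct (HMw z' ltac:(lra)) as [Hw1 Hw2].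
      destruct (HMv (z' + s) ltac:(lra)) as [Hv1 Hv2].
      destruct (Bv (z' + s)). destruct (Bw z').
      pose proof (P1 (z' + s)). pose proof (P2 (z' + s)). pose proof (P1' z'). pose proof (P2' z').
      apply (good_L L e); try lra; split; lra.
    + apply Hmid; lra.
    + apply Hmid; lra.
  - destruct (Rle_or_lt z B) as [HzB|HzB].
    + apply Hmid; lra.
    + apply (sol_maxp_right L v1 v2 p1 p2 w1 w2 q1 q2 s B Sv0 Sw0); try lra.
      * intros z' Hz'. destruct (HNw z' ltac:(lra)) as [Hw1 Hw2].
        destruct (HNv (z' + s) ltac:(lra)) as [Hv1 Hv2].
        destruct (Bv (z' + s)). destruct (Bw z').
        pose proof (P1 (z' + s)). pose proof (P2 (z' + s)). pose proof (P1' z'). pose proof (P2' z').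
        apply (good_R L e); try lra; split; lra.
      * apply Hmid; lra.
      * apply Hmid; lra.
Qed.


Lemma core L v1 v2 p1 p2 w1 w2 q1 q2 : 1 < L ->
  SolF L v1 v2 p1 p2 -> SolF L w1 w2 q1 q2 -> (forall x y, x < y -> v1 x < v1 y) ->
  exists c, forall z, w1 z = v1 (z + c) /\ w2 z = v2 (z + c).
Proof.
  intros HL Sv Sw Hmon.
  destruct (stepA L v1 v2 p1 p2 w1 w2 q1 q2 HL Sv Sw Hmon) as [T HT].
  pose proof Sv as [D1 [E1 [D2 [E2 [P1 [P2 [LM1 [LM2 [LP1 LP2]]]]]]]]].
  pose proof Sw as [D1' [E1' [D2' [E2' [P1' [P2' [LM1' [LM2' [LP1' LP2']]]]]]]]].
  destruct (LM1 (w1 0) (P1' 0)) as [M HM].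
  assert (HnoP : forall t, t < M -> ~ Pord v1 v2 w1 w2 t).
  { intros t Ht HP. destruct (HP 0) as [H1 _]. rewrite Rplus_0_l in H1.
    specialize (HM t Ht). rewrite Rminus_0_r in HM. apply Rabs_def2 in HM. lra. }
  set (S := fun t => forall s, t <= s -> Pord v1 v2 w1 w2 s).
  set (E := fun u => S (- u)).
  assert (Hb : bound E).
  { exists (- M). intros u Hu. unfold E, S in Hu. specialize (Hu (- u) (Rle_refl _)).
    destruct (Rlt_or_le (- u) M) as [Hlt|Hle]. exfalso; apply (HnoP _ Hlt Hu). lra. }
  assert (Hne : exists x, E x).
  { exists (- T). unfold E, S. rewrite Ropp_involutive. auto. }
  destruct (completeness E Hb Hne) as [m [Hub Hlub]].
  set (ts := - m).
  assert (Hlow : forall t, S t -> ts <= t).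
  { intros t Ht. assert (E (- t)) by (unfold E; rewrite Ropp_involutive; auto).
    specialize (Hub _ H). unfold ts. lra. }
  assert (Hgr : forall b, (forall t, S t -> b <= t) -> b <= ts).
  { intros b Hbt. assert (m <= - b).
    { apply Hlub. intros u Hu. specialize (Hbt _ Hu). lra. }
    unfold ts; lra. }
  assert (HC : forall s, ts < s -> Pord v1 v2 w1 w2 s).
  { intros s Hs. destruct (classic (Pord v1 v2 w1 w2 s)) as [|Hn]; auto. exfalso.
    assert (s <= ts).
    { apply Hgr. intros t Ht. destruct (Rle_or_lt s t); auto. exfalso. apply Hn. apply Ht. lra. }
    lra. }
  assert (Pts : Pord v1 v2 w1 w2 ts).
  { intros z. split.
    - destruct (Rle_or_lt 0 (v1 (z + ts) - w1 z)) as [|Hneg]; auto. exfalso.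
      destruct (cont_eps v1 (z + ts) (dl_cont _ _ _ (D1 (z + ts))) (- (v1 (z + ts) - w1 z)))
        as [d [Hd Hd2]]. lra.
      destruct (HC (ts + d / 2) ltac:(lra) z) as [H1 _].
      assert (Hx : Rabs (v1 (z + (ts + d / 2)) - v1 (z + ts)) < - (v1 (z + ts) - w1 z)).
      { apply Hd2. replace (z + (ts + d / 2) - (z + ts)) with (d / 2) by ring.
        rewrite Rabs_right; lra. }
      apply Rabs_def2 in Hx. lra.
    - destruct (Rle_or_lt 0 (w2 z - v2 (z + ts))) as [|Hneg]; auto. exfalso.
      destruct (cont_eps v2 (z + ts) (dl_cont _ _ _ (D2 (z + ts))) (- (w2 z - v2 (z + ts))))
        as [d [Hd Hd2]]. lra.
      destruct (HC (ts + d / 2) ltac:(lra) z) as [_ H1].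
      assert (Hx : Rabs (v2 (z + (ts + d / 2)) - v2 (z + ts)) < - (w2 z - v2 (z + ts))).
      { apply Hd2. replace (z + (ts + d / 2) - (z + ts)) with (d / 2) by ring.
        rewrite Rabs_right; lra. }
      apply Rabs_def2 in Hx. lra. }
  assert (Sts : S ts).
  { intros s Hs. destruct (Rle_lt_or_eq_dec _ _ Hs) as [Hlt|Heq]. apply HC; auto. subst s; auto. }
  destruct (dichot L v1 v2 p1 p2 w1 w2 q1 q2 ts HL Sv Sw Pts) as [Hstr|Heq].
  - exfalso. destruct (stepE L v1 v2 p1 p2 w1 w2 q1 q2 ts HL Sv Sw Hstr) as [ep [Hep Hep2]].
    assert (S (ts - ep)).
    { intros s Hs. destruct (Rle_or_lt s ts). apply Hep2; lra. apply Sts; lra. }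
    specialize (Hlow _ H). lra.
  - exists ts. exact Heq.
Qed.

Lemma SolF_refl L v1 v2 p1 p2 : SolF L v1 v2 p1 p2 ->
  SolF L (fun z => v2 (- z)) (fun z => v1 (- z)) (fun z => - p2 (- z)) (fun z => - p1 (- z)).
Proof.
  intros [D1 [E1 [D2 [E2 [P1 [P2 [LM1 [LM2 [LP1 LP2]]]]]]]]].
  repeat split.
  - intros z. apply (dl_refl v2 z (p2 (- z))). auto.
  - intros z. assert (H := dl_refl (fun u => - p2 u) z _ (dl_opp p2 (- z) _ (E2 (- z)))).
    rewrite Ropp_involutive in H. exact H.
  - intros z. apply (dl_refl v1 z (p1 (- z))). auto.
  - intros z. assert (H := dl_refl (fun u => - p1 u) z _ (dl_opp p1 (- z) _ (E1 (- z)))).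
    rewrite Ropp_involutive in H. exact H.
  - intros z; auto.
  - intros z; auto.
  - intros e He. destruct (LP2 e He) as [N HN]. exists (- N). intros z Hz. apply HN. lra.
  - intros e He. destruct (LP1 e He) as [N HN]. exists (- N). intros z Hz. apply HN. lra.
  - intros e He. destruct (LM2 e He) as [N HN]. exists (- N). intros z Hz. apply HN. lra.
  - intros e He. destruct (LM1 e He) as [N HN]. exists (- N). intros z Hz. apply HN. lra.
Qed.

Lemma adm_SolF L v1 v2 : admissible L v1 v2 -> SolF L v1 v2 (Derive v1) (Derive v2).
Proof.
  intros [[T1 [T2 [O1 O2]]] [[B1 [B2 [B3 B4]]] [P1 [P2 _]]]].
  repeat split.
  - intros z. apply is_derive_Reals. apply Derive_correct. apply (T1 z).
  - intros z. apply is_derive_Reals.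
    replace (fv L (v1 z) (v2 z)) with (Derive (Derive v1) z).
    apply Derive_correct. apply (T1 z).
    specialize (O1 z). change (Derive_n v1 2 z) with (Derive (Derive v1) z) in O1. unfold fv. lra.
  - intros z. apply is_derive_Reals. apply Derive_correct. apply (T2 z).
  - intros z. apply is_derive_Reals.
    replace (fv L (v2 z) (v1 z)) with (Derive (Derive v2) z).
    apply Derive_correct. apply (T2 z).
    specialize (O2 z). change (Derive_n v2 2 z) with (Derive (Derive v2) z) in O2. unfold fv. lra.
  - auto.
  - auto.
  - apply limM_of; auto.
  - apply limM_of; auto.
  - apply limP_of; auto.
  - apply limP_of; auto.
Qed.

Theorem theorem1p3 (L : R) (hL : 1 < L) (v1 v2 w1 w2 : R -> R) :
  admissible L v1 v2 -> admissible L w1 w2 ->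
  exists c : R, forall z : R, w1 z = v1 (z + c) /\ w2 z = v2 (z + c).
Proof.
  intros Hv Hw.
  assert (Sv := adm_SolF L v1 v2 Hv). assert (Sw := adm_SolF L w1 w2 Hw).
  pose proof Sv as [_ [_ [_ [_ [P1 [P2 [LM1 [LM2 [LP1 LP2]]]]]]]]].
  destruct Hv as [_ [_ [_ [_ Hmono]]]].
  destruct Hmono as [[Hinc|Hdec]|[Hinc|Hdec]].
  - apply (core L v1 v2 _ _ w1 w2 _ _ hL Sv Sw Hinc).
  - exfalso. destruct (LM1 (v1 0) (P1 0)) as [M HM].
    set (x := Rmin (M - 1) (-1)).
    assert (x < M) by (unfold x; pose proof (Rmin_l (M-1) (-1)); lra).
    assert (x < 0) by (unfold x; pose proof (Rmin_r (M-1) (-1)); lra).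
    specialize (HM x H). specialize (Hdec x 0 H0). rewrite Rminus_0_r in HM.
    apply Rabs_def2 in HM. lra.
  - exfalso. destruct (LP2 (v2 0) (P2 0)) as [M HM].
    set (x := Rmax (M + 1) 1).
    assert (M < x) by (unfold x; pose proof (Rmax_l (M+1) 1); lra).
    assert (0 < x) by (unfold x; pose proof (Rmax_r (M+1) 1); lra).
    specialize (HM x H). specialize (Hinc 0 x H0). rewrite Rminus_0_r in HM.
    apply Rabs_def2 in HM. lra.
  - assert (Hm : forall x y, x < y -> (fun z => v2 (- z)) x < (fun z => v2 (- z)) y).
    { intros x y Hxy. apply Hdec. lra. }
    destruct (core L _ _ _ _ _ _ _ _ hL (SolF_refl L _ _ _ _ Sv) (SolF_refl L _ _ _ _ Sw) Hm)
      as [c Hc].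
    exists (- c). intros z. destruct (Hc (- z)) as [H1 H2]. cbv beta in H1, H2.
    rewrite Ropp_involutive in H1, H2.
    replace (- (- z + c)) with (z + - c) in H1, H2 by ring. split; auto.
Qed.
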